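(* Finite prime fields $\mathrm{F}_q$ locally approximate the field of real numbers: $\mathsf{lm}^{\mathrm{loc}}\, \mathrm{F}_q = \mathbb{R}$, i.e. the local ultraproduct of the finite fields $\mathrm{F}_q$ (with the emerging metric described below) is the field $\mathbb{R}$.
   Context: Let $\mathcal{D}$ be a non-principal ultrafilter on $\mathbb{N}$ containing the set of primes, and let ${}^*\mathbb{Z}$ be the corresponding ultrapower of $\mathbb{Z}$. Let $\mathfrak{q}\in {}^*\mathbb{Z}$ be the non-standard prime represented in the $q$-th coordinate by $q$, so that $\mathrm{F}={}^*\mathbb{Z}_{\mathfrak{q}}\cong \prod_\mathcal{D}\mathrm{F}_q$ is the pseudofinite field that is the ultraproduct of the finite prime fields $\mathrm{F}_q$. Assume there is a model ${}^f\mathbb{Z}$ of arithmetic with $\mathbb{Z}\prec {}^f\mathbb{Z}\prec {}^*\mathbb{Z}$ and $\mathfrak{q}> {}^f\mathbb{Z}$ (so $\mathfrak{q}$ exceeds every element of ${}^f\mathbb{Z}$), and let $\mathfrak{l}\in {}^f\mathbb{Z}_{>0}$ be an infinite integer; then $\mathfrak{l}^n<\mathfrak{q}$ for all $n\in\mathbb{N}$. Put ${}^f\mathbb{Z}_{/\mathfrak{l}}(n)=\{k\in {}^*\mathbb{Z}: |k|<\mathfrak{l}^n\}$, which embeds in $\mathrm{F}$ via $k\mapsto k \bmod \mathfrak{q}$. For $m\in\mathbb{N}$ let $S_m(\mathrm{F})=\{z\in\mathrm{F}: \exists k_1,k_2\in {}^f\mathbb{Z}_{/\mathfrak{l}}(m),\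 z=k_1k_2^{-1},\ |k_1|/|k_2|\le m\}$ and $\mathrm{F}_{/\mathfrak{l}}=\bigcup_m S_m(\mathrm{F})$, a subfield of $\mathrm{F}$. On it define the norm $\|z\|=\mathrm{st}(|k_1|/|k_2|)$ for the minimal pair $k_1,k_2$ with $z=k_1k_2^{-1}$ ($\mathrm{st}$ the standard part), and the distance $\mathsf{d}(z_1,z_2)=\|z_1-z_2\|$. The same definitions are applied to each finite field $\mathrm{F}_q$ by interpreting $\mathfrak{l}$ as its $q$-th coordinate $\mathfrak{l}(q)$; these sorts $S_m$ and distance form an emerging metric on the family $\mathrm{F}_q$. The local ultraproduct $\mathsf{lm}^{\mathrm{loc}}\,\mathrm{F}_q$ is defined as follows: take the substructure of the first-order ultraproduct with universe $\bigcup_{m\in\mathbb{N}} S_m$ (here $\mathrm{F}_{/\mathfrak{l}}$), and quotient by the relation $x_1\approx x_2 \iff \mathsf{d}(x_1,x_2)\le 1/n$ for all standard $n$; the result is a complete metric structure. *)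

(* Defs.v *)
From HB Require Import structures.
From mathcomp Require Import all_boot all_order all_algebra.
From mathcomp Require Import boolp classical_sets filter reals.
Set Implicit Arguments. Unset Strict Implicit. Unset Printing Implicit Defensive.
Import Order.TTheory GRing.Theory Num.Theory.
Local Open Scope ring_scope.
Local Open Scope classical_set_scope.

Definition ae (D : set_system nat) (P : nat -> Prop) : Prop := D [set q | P q].

Definition nonprincipal (D : set_system nat) : Prop := forall n : nat, ~ D [set n].

Inductive term : Type :=
| tvar of nat | tzero | tone
| tadd of term & term | tmul of term & term | topp of term.

Inductive formula : Type :=
| feq of term & term | flt of term & term
| fnot of formula | fand of formula & formula
| fex of nat & formula.

Section Semantics.
Variables (A : Type) (z o : A) (add mul : A -> A -> A) (opp : A -> A)
          (eqA ltA : A -> A -> Prop) (dom : A -> Prop).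

Fixpoint teval (e : nat -> A) (t : term) : A :=
  match t with
  | tvar i => e i
  | tzero => z
  | tone => o
  | tadd t1 t2 => add (teval e t1) (teval e t2)
  | tmul t1 t2 => mul (teval e t1) (teval e t2)
  | topp t1 => opp (teval e t1)
  end.

Definition upd (e : nat -> A) (i : nat) (a : A) : nat -> A :=
  fun j => if j == i then a else e j.

Fixpoint fsat (e : nat -> A) (f : formula) : Prop :=
  match f with
  | feq t1 t2 => eqA (teval e t1) (teval e t2)
  | flt t1 t2 => ltA (teval e t1) (teval e t2)
  | fnot f1 => ~ fsat e f1
  | fand f1 f2 => fsat e f1 /\ fsat e f2
  | fex i f1 => exists a, dom a /\ fsat (upd e i a) f1
  end.
End Semantics.

Definition satZ (e : nat -> int) (f : formula) : Prop :=
  fsat 0 1 +%R *%R -%R (@eq int) (fun a b => a < b) (fun _ => True) e f.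

(* elements of the ultrapower *Z are represented by sequences nat -> int;
   equality and order are D-almost-everywhere *)
Definition hypint := nat -> int.

Definition satU (D : set_system nat) (dom : hypint -> Prop)
  (e : nat -> hypint) (f : formula) : Prop :=
  fsat (fun _ => 0) (fun _ => 1) (fun x y q => x q + y q) (fun x y q => x q * y q)
    (fun x q => - x q)
    (fun x y => ae D (fun q => x q = y q))
    (fun x y => ae D (fun q => x q < y q)) dom e f.

(* M (a set of representatives, closed under D-a.e. equality) is a model fZ of
   arithmetic with Z < fZ < *Z (elementary substructures) *)
Definition elem_intermediate (D : set_system nat) (M : hypint -> Prop) : Prop :=
  [/\ (forall x y : hypint, M x -> ae D (fun q => x q = y q) -> M y),
      (forall k : int, M (fun _ => k)),
      (forall (f : formula) (e : nat -> hypint), (forall i, M (e i)) ->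
          (satU D M e f <-> satU D (fun _ => True) e f))
    & (forall (f : formula) (e : nat -> int),
          satZ e f <-> satU D M (fun i _ => e i) f)].

(* z lies in the sort S_m(F_q), l q being the q-th coordinate of the infinite integer l *)
Definition inS (l : hypint) (m : nat) (q : nat) (z : 'F_q) : Prop :=
  exists k1 k2 : int,
    [/\ `|k1| < l q ^+ m, `|k2| < l q ^+ m, (k2%:~R : 'F_q) != 0,
        z = k1%:~R / k2%:~R & `|k1| <= m%:Z * `|k2|].

(* elements of the first-order ultraproduct prod_D F_q: sequences of coordinates *)
Definition ultraelt := forall q : nat, 'F_q.

Definition uadd (x y : ultraelt) : ultraelt := fun q => x q + y q.
Definition umul (x y : ultraelt) : ultraelt := fun q => x q * y q.
Definition uone : ultraelt := fun q => 1.

Definition Sm (D : set_system nat) (l : hypint) (m : nat) (x : ultraelt) : Prop :=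
  ae D (fun q => inS l m (x q)).
Definition Fl (D : set_system nat) (l : hypint) (x : ultraelt) : Prop :=
  exists m : nat, Sm D l m x.

Definition minpair (q : nat) (z : 'F_q) (k1 k2 : int) : Prop :=
  [/\ (k2%:~R : 'F_q) != 0, z = k1%:~R / k2%:~R &
      forall j1 j2 : int, (j2%:~R : 'F_q) != 0 -> z = j1%:~R / j2%:~R ->
        Num.max `|k1| `|k2| <= Num.max `|j1| `|j2|].

(* d(x,y) = r : r is the standard part of |k1|/|k2| for the minimal pair of x - y *)
Definition dist_is (R : realType) (D : set_system nat) (x y : ultraelt) (r : R) : Prop :=
  forall eps : R, 0 < eps ->
    ae D (fun q => exists k1 k2 : int, minpair (x q - y q) k1 k2 /\
            `| (`|k1|%:~R / `|k2|%:~R : R) - r | < eps).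

Definition approx (R : realType) (D : set_system nat) (x y : ultraelt) : Prop :=
  forall n : nat, exists r : R, dist_is D x y r /\ r <= (n.+1%:R)^-1.

(* Main.v *)
Require Import Defs.
From HB Require Import structures.
From mathcomp Require Import all_boot all_order all_algebra.
From mathcomp Require Import boolp classical_sets filter reals.
From mathcomp Require Import zify ring lra.
Import Order.TTheory GRing.Theory Num.Theory.
Local Open Scope ring_scope.
Local Open Scope classical_set_scope.

Lemma aeS (D : set_system nat) (FD : Filter D) (P Q : nat -> Prop) :
  (forall q, P q -> Q q) -> ae D P -> ae D Q.
Proof. by move=> PQ; apply: filterS => q /=; apply: PQ. Qed.

Lemma aeI (D : set_system nat) (FD : Filter D) (P Q : nat -> Prop) :
  ae D P -> ae D Q -> ae D (fun q => P q /\ Q q).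
Proof. by move=> hP hQ; exact: (filterI hP hQ). Qed.

Lemma aeT (D : set_system nat) (FD : Filter D) (P : nat -> Prop) :
  (forall q, P q) -> ae D P.
Proof. by move=> hP; apply: filterS (@filterT _ D FD) => q _; apply: hP. Qed.

Lemma ae_ex (D : set_system nat) (FD : ProperFilter D) (P : nat -> Prop) :
  ae D P -> exists q, P q.
Proof. by move=> /filter_ex [q Pq]; exists q. Qed.

Lemma ae_em (D : set_system nat) (UD : UltraFilter D) (P : nat -> Prop) :
  ae D P \/ ae D (fun q => ~ P q).
Proof. by case: (in_ultra_setVsetC [set q | P q] UD) => h; [left|right]. Qed.
Arguments aeS {D FD P Q}. Arguments aeI {D FD P Q}. Arguments aeT {D FD P}.
Arguments ae_ex {D FD P}. Arguments ae_em {D UD}.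

Lemma Fq_int_eq0 (q : nat) (hq : prime q) (k : int) :
  ((k%:~R : 'F_q) == 0) = (q %| k)%Z.
Proof. by rewrite (dvdz_pcharf (pchar_Fp hq)). Qed.

Lemma dvdz_small (q : nat) (k : int) : (q %| k)%Z -> `|k| < q%:Z -> k = 0.
Proof.
move=> hd hk; have : (q %| `|k|)%N by [].
case: (posnP `|k|%N) => [/eqP|pos]; first by rewrite absz_eq0 => /eqP.
move=> /(dvdn_leq pos); lia.
Qed.

Lemma int_nz (q : nat) (k : int) : (k%:~R : 'F_q) != 0 -> k != 0.
Proof. by apply: contraNneq => ->; rewrite mulr0z. Qed.

Lemma rep_uniq (q : nat) (hq : prime q) (a b c d : int) :
  (b%:~R : 'F_q) != 0 -> (d%:~R : 'F_q) != 0 ->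
  (a%:~R / b%:~R : 'F_q) = c%:~R / d%:~R -> `|a * d - c * b| < q%:Z ->
  a * d = c * b.
Proof.
move=> hb hd he hs.
suff : a * d - c * b = 0 by move/eqP; rewrite subr_eq0 => /eqP.
apply: (@dvdz_small q _ _ hs); rewrite -Fq_int_eq0 //.
rewrite intrB !intrM; apply/eqP.
have := he; move/(congr1 (fun t => t * b%:~R * d%:~R)).
rewrite divfK // mulrAC divfK // => ->; ring.
Qed.
Lemma Fq_lift (q : nat) (z : 'F_q) : z = ((z : nat)%:Z)%:~R / (1%:Z)%:~R.
Proof. by rewrite divr1 -pmulrn natr_Zp. Qed.


Lemma minpair_ex (q : nat) (z : 'F_q) : exists k1 k2, minpair z k1 k2.
Proof.
pose P n := `[< exists j1 j2 : int, [/\ (j2%:~R : 'F_q) != 0, z = j1%:~R / j2%:~R &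
   absz (Num.max `|j1| `|j2|) = n] >].
have ex : exists n, P n.
  exists (absz (Num.max `|((z : nat)%:Z)| `|1%:Z|)); apply/asboolP.
  by exists (z : nat)%:Z, 1; split => //; apply: Fq_lift.
case: (ex_minnP ex) => n /asboolP [j1 [j2 [h1 h2 h3]]] hmin.
exists j1, j2; split => // k1 k2 hk1 hk2.
have : P (absz (Num.max `|k1| `|k2|)) by apply/asboolP; exists k1, k2.
move=> /hmin; rewrite -h3; lia.
Qed.

Definition rep (q : nat) (z : 'F_q) (a b h : int) :=
  [/\ (b%:~R : 'F_q) != 0, z = a%:~R / b%:~R, `|a| <= h & `|b| <= h].
Arguments rep {q}.

Lemma minpair_rep (q : nat) (hq : prime q) (z : 'F_q) (a b h k1 k2 : int) :
  rep z a b h -> 2 * h * h < q%:Z -> minpair z k1 k2 -> k1 * b = a * k2.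
Proof.
move=> [hb hz ha hbh] hh [hk2 hzk hmin].
have hm := hmin a b hb hz.
apply: (@rep_uniq q hq k1 k2 a b hk2 hb); first by rewrite -hzk.
have e1 : `|k1| <= h by lia.
have e2 : `|k2| <= h by lia.
have f1 : `|k1 * b| <= h * h by rewrite normrM; apply: ler_pM.
have f2 : `|a * k2| <= h * h by rewrite normrM; apply: ler_pM.
lia.
Qed.

Lemma ratio_eq (R : numFieldType) (a b c d : int) : b != 0 -> d != 0 ->
  a * d = c * b -> (a%:~R / b%:~R : R) = c%:~R / d%:~R.
Proof.
move=> hb hd he; apply/eqP; rewrite eqr_div ?intr_eq0 // -!intrM he //.
Qed.

Definition val (R : realType) (q : nat) (z : 'F_q) : R :=
  xget 0 [set r | exists k1 k2, minpair z k1 k2 /\ r = k1%:~R / k2%:~R].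
Arguments val R {q}.

Lemma val_rep (R : realType) (q : nat) (hq : prime q) (z : 'F_q) (a b h : int) :
  rep z a b h -> 2 * h * h < q%:Z ->
  val R z = a%:~R / b%:~R /\
  forall k1 k2, minpair z k1 k2 -> (`|k1|%:~R / `|k2|%:~R : R) = `|a%:~R / b%:~R|.
Proof.
move=> hr hh.
have key : forall k1 k2, minpair z k1 k2 -> (k1%:~R / k2%:~R : R) = a%:~R / b%:~R.
  move=> k1 k2 hm; apply: ratio_eq; first by case: hm => /int_nz.
  - by case: hr => /int_nz.
  - exact: (@minpair_rep q hq z a b h k1 k2 hr hh hm).
split.
  have [k1 [k2 hm]] := @minpair_ex q z.
  have : [set r : R | exists k1 k2, minpair z k1 k2 /\ r = k1%:~R / k2%:~R]
      (xget 0 [set r | exists k1 k2, minpair z k1 k2 /\ r = k1%:~R / k2%:~R]).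
    by apply: xgetPex; exists (k1%:~R / k2%:~R), k1, k2.
  by rewrite /val; move=> [j1 [j2 [hj ->]]]; apply: key.
move=> k1 k2 hm; rewrite -(key k1 k2 hm) normrM normfV !intr_norm //.
Qed.

Lemma inS_mono (l : hypint) (m m' q : nat) (z : 'F_q) :
  1 <= l q -> (m <= m')%N -> inS l m z -> inS l m' z.
Proof.
move=> hl hmm [k1 [k2 [h1 h2 h3 h4 h5]]].
have e : l q ^+ m <= l q ^+ m' by apply: ler_weXn2l.
exists k1, k2; split => //; try lia; nia.
Qed.

Lemma inS_add (l : hypint) (m n q : nat) (z1 z2 : 'F_q) (s : int) : `|s| = 1 ->
  2 <= l q -> inS l m z1 -> inS l n z2 -> inS l (m + n).+1 (z1 + s%:~R * z2).
Proof.
move=> hs hl [a [b [ha hb hb0 hz1 hab]]] [c [d [hc hd hd0 hz2 hcd]]].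
have hP : 2 * (l q ^+ m * l q ^+ n) <= l q * (l q ^+ m * l q ^+ n).
  apply: ler_wpM2r => //; apply: mulr_ge0; apply: exprn_ge0; lia.
exists (a * d + s * c * b), (b * d); split.
- rewrite exprS exprD.
  have f1 : `|a * d| < l q ^+ m * l q ^+ n by rewrite normrM; apply: ltr_pM.
  have f2 : `|s * c * b| < l q ^+ m * l q ^+ n.
    by rewrite !normrM hs mul1r mulrC; apply: ltr_pM.
  move: hP f1 f2; set P := _ * _; set x := a * d; set y := s * c * b.
  move=> *; lia.
- rewrite exprS exprD.
  have f1 : `|b * d| < l q ^+ m * l q ^+ n by rewrite normrM; apply: ltr_pM.
  move: hP f1; set P := _ * _; set x := b * d.
  move=> *; lia.
- by rewrite intrM mulf_neq0.
- rewrite hz1 hz2 intrD !intrM; field; apply/andP; split => //.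
- have e1 : `|a| * `|d| <= m%:Z * (`|b| * `|d|) by rewrite mulrA; apply: ler_wpM2r.
  have e2 : `|c| * `|b| <= n%:Z * (`|b| * `|d|) by rewrite [`|b| * `|d|]mulrC mulrA; apply: ler_wpM2r.
  have e3 : `|a * d + s * c * b| <= `|a| * `|d| + `|c| * `|b|.
    by apply: le_trans (ler_normD _ _) _; rewrite !normrM hs mul1r.
  have e4 : (m%:Z + n%:Z) * (`|b| * `|d|) <= (m + n).+1%:Z * (`|b| * `|d|).
    by apply: ler_wpM2r => //; lia.
  rewrite normrM; move: e1 e2 e3 e4; set X := `|b| * `|d|.
  set u := `|a * d + s * c * b|; set v := `|a| * `|d|; set w := `|c| * `|b|.
  move=> *; nia.
Qed.

Lemma inS_mul (l : hypint) (m n q : nat) (z1 z2 : 'F_q) :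
  1 <= l q -> inS l m z1 -> inS l n z2 -> inS l (m + n + m * n) (z1 * z2).
Proof.
move=> hl [a [b [ha hb hb0 hz1 hab]]] [c [d [hc hd hd0 hz2 hcd]]].
have hP : l q ^+ (m + n) <= l q ^+ (m + n + m * n) by apply: ler_weXn2l => //; lia.
exists (a * c), (b * d); split.
- have f1 : `|a * c| < l q ^+ m * l q ^+ n by rewrite normrM; apply: ltr_pM.
  move: f1; rewrite -exprD; lia.
- have f1 : `|b * d| < l q ^+ m * l q ^+ n by rewrite normrM; apply: ltr_pM.
  move: f1; rewrite -exprD; lia.
- by rewrite intrM mulf_neq0.
- by rewrite hz1 hz2 !intrM; field; apply/andP; split.
- have e1 : `|a| * `|c| <= (m%:Z * `|b|) * (n%:Z * `|d|) by apply: ler_pM.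
  have e4 : (m%:Z * n%:Z) * (`|b| * `|d|) <= (m + n + m * n)%N%:Z * (`|b| * `|d|).
    by apply: ler_wpM2r => //; lia.
  rewrite !normrM; move: e1 e4.
  have -> : m%:Z * `|b| * (n%:Z * `|d|) = (m%:Z * n%:Z) * (`|b| * `|d|) by ring.
  set X := `|b| * `|d|; set v := `|a| * `|c|.
  move=> *; lia.
Qed.

Lemma M_mul (D : set_system nat) (FD : Filter D) (M : hypint -> Prop)
  (hM : elem_intermediate D M) (x y : hypint) :
  M x -> M y -> M (fun q => x q * y q).
Proof.
case: hM => hclos hconst hel _ Mx My.
pose e : nat -> hypint := fun i => if i == 0%N then x else y.
have eM : forall i, M (e i) by move=> i; rewrite /e; case: (i == 0%N).
pose f := fex 2 (feq (tvar 2) (tmul (tvar 0) (tvar 1))).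
have h1 : satU D (fun _ => True) e f.
  exists (fun q => x q * y q); split => //; rewrite /upd /=.
  by apply: aeT => q; rewrite /e.
have := (hel f e eM).2 h1.
move=> [a [Ma ha]]; apply: (hclos a) => //.
Qed.

Lemma M_pow (D : set_system nat) (FD : Filter D) (M : hypint -> Prop)
  (hM : elem_intermediate D M) (l : hypint) (n : nat) :
  M l -> M (fun q => l q ^+ n).
Proof.
move=> Ml; have hM' := hM; case: hM' => hclos hconst _ _.
elim: n => [|n IH].
  apply: (hclos (fun _ => 1)) => //; apply: aeT => q; by rewrite expr0.
have h := @M_mul D FD M hM _ _ Ml IH.
apply: (hclos _ _ h); apply: aeT => q; by rewrite exprS.
Qed.

Lemma inS_rep (l : hypint) (m q : nat) (z : 'F_q) :
  inS l m z -> exists a b, rep z a b (l q ^+ m) /\ `|a| <= m%:Z * `|b|.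
Proof.
move=> [a [b [h1 h2 h3 h4 h5]]]; exists a, b; split => //; split => //; lia.
Qed.

Lemma rep_add (q : nat) (z1 z2 : 'F_q) (a b c d h1 h2 s : int) : `|s| = 1 ->
  rep z1 a b h1 -> rep z2 c d h2 ->
  rep (z1 + s%:~R * z2) (a * d + s * c * b) (b * d) (2 * h1 * h2).
Proof.
move=> hs [hb hz1 ha hbh] [hd hz2 hc hdh]; split.
- by rewrite intrM mulf_neq0.
- rewrite hz1 hz2 intrD !intrM; field; apply/andP; split => //.
- have f1 : `|a * d| <= h1 * h2 by rewrite normrM; apply: ler_pM.
  have f2 : `|s * c * b| <= h1 * h2.
    by rewrite !normrM hs mul1r mulrC; apply: ler_pM.
  move: f1 f2; set P := h1 * h2; set x := a * d; set y := s * c * b.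
  rewrite -mulrA; move=> *; lia.
- have f1 : `|b * d| <= h1 * h2 by rewrite normrM; apply: ler_pM.
  have : 0 <= h1 * h2 by lia.
  move: f1; rewrite -mulrA; set P := h1 * h2; set x := b * d.
  move=> *; lia.
Qed.

Lemma rep_mul (q : nat) (z1 z2 : 'F_q) (a b c d h1 h2 : int) :
  rep z1 a b h1 -> rep z2 c d h2 ->
  rep (z1 * z2) (a * c) (b * d) (h1 * h2).
Proof.
move=> [hb hz1 ha hbh] [hd hz2 hc hdh]; split.
- by rewrite intrM mulf_neq0.
- by rewrite hz1 hz2 !intrM; field; apply/andP; split.
- by rewrite normrM; apply: ler_pM.
- by rewrite normrM; apply: ler_pM.
Qed.

Lemma val_small (R : realType) (q : nat) (hq : prime q) (z : 'F_q) (a b h L : int) :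
  rep z a b h -> h <= L -> 2 * L * L < q%:Z ->
  val R z = a%:~R / b%:~R /\
  forall k1 k2, minpair z k1 k2 -> (`|k1|%:~R / `|k2|%:~R : R) = `|a%:~R / b%:~R|.
Proof.
move=> [hb hz ha hbh] hL hs; apply: (@val_rep R q hq z a b L) => //.
split => //; lia.
Qed.

Lemma ratio_add (R : numFieldType) (a b c d s : int) : b != 0 -> d != 0 ->
  ((a * d + s * c * b)%:~R / (b * d)%:~R : R) = a%:~R / b%:~R + s%:~R * (c%:~R / d%:~R).
Proof.
move=> hb hd; rewrite intrD !intrM; field.
by apply/andP; split; rewrite intr_eq0.
Qed.

Lemma ratio_mul (R : numFieldType) (a b c d : int) : b != 0 -> d != 0 ->
  ((a * c)%:~R / (b * d)%:~R : R) = (a%:~R / b%:~R) * (c%:~R / d%:~R).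
Proof.
move=> hb hd; rewrite !intrM; field.
by apply/andP; split; rewrite intr_eq0.
Qed.

Definition lim_is (R : realType) (D : set_system nat) (a : nat -> R) (r : R) :=
  forall eps : R, 0 < eps -> ae D (fun q => `|a q - r| < eps).
Arguments lim_is {R}.

Lemma lim_uniq (R : realType) (D : set_system nat) (FD : ProperFilter D)
  (a : nat -> R) (r s : R) : lim_is D a r -> lim_is D a s -> r = s.
Proof.
move=> hr hs.
have H : forall eps : R, 0 < eps -> `|r - s| < 2 * eps.
  move=> eps he; have [q [h1 h2]] := ae_ex (aeI (hr eps he) (hs eps he)).
  move: h1 h2; rewrite !ltr_norml => /andP [h1 h1'] /andP [h2 h2'].
  apply/andP; split; lra.
case: (eqVneq r s) => // hne.
have hp : 0 < `|r - s| by rewrite normr_gt0 subr_eq0.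
have := H (`|r - s| / 4) ltac:(lra); lra.
Qed.

Lemma lim_ex (R : realType) (D : set_system nat) (UD : UltraFilter D)
  (a : nat -> R) (B : R) : ae D (fun q => `|a q| <= B) -> exists r, lim_is D a r.
Proof.
move=> hB.
pose S := [set r : R | ae D (fun q => r <= a q)].
have hS : has_sup S.
  split.
    exists (- B); apply: aeS hB => q; rewrite ler_norml => /andP [h _]; exact: h.
  exists B => r hr; have [q [h1 h2]] := ae_ex (aeI hr hB).
  move: h2; rewrite ler_norml => /andP [_ h2]; exact: le_trans h1 h2.
exists (sup S) => eps he.
have [e Se he'] := sup_adherent he hS.
have hn : ~ S (sup S + eps / 2).
  move=> /(sup_upper_bound hS) h; lra.
case: (ae_em (fun q => sup S + eps / 2 <= a q)) => [//|h2].
apply: aeS (aeI Se h2) => q [h3 h4].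
have h4' : a q < sup S + eps / 2 by rewrite ltNge; apply/negP.
rewrite ltr_norml; apply/andP; split; lra.
Qed.

Lemma lim_ae (R : realType) (D : set_system nat) (FD : Filter D)
  (a b : nat -> R) (r : R) : ae D (fun q => a q = b q) -> lim_is D a r -> lim_is D b r.
Proof.
move=> hab ha eps he; apply: aeS (aeI hab (ha eps he)) => q [-> //].
Qed.

Lemma lim_const (R : realType) (D : set_system nat) (FD : Filter D) (c : R) :
  lim_is D (fun _ => c) c.
Proof. by move=> eps he; apply: aeT => q; rewrite subrr normr0. Qed.

Lemma lim_add (R : realType) (D : set_system nat) (FD : Filter D)
  (a b : nat -> R) (r s : R) : lim_is D a r -> lim_is D b s ->
  lim_is D (fun q => a q + b q) (r + s).
Proof.
move=> ha hb eps he.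
have he2 : 0 < eps / 2 by lra.
apply: aeS (aeI (ha _ he2) (hb _ he2)) => q.
rewrite !ltr_norml => -[/andP [h1 h2] /andP [h3 h4]].
apply/andP; split; lra.
Qed.

Lemma lim_norm (R : realType) (D : set_system nat) (FD : Filter D)
  (a : nat -> R) (r : R) : lim_is D a r -> lim_is D (fun q => `|a q|) `|r|.
Proof.
move=> ha eps he; apply: aeS (ha _ he) => q h.
exact: le_lt_trans (ler_dist_dist _ _) h.
Qed.

Lemma lim_mul (R : realType) (D : set_system nat) (FD : Filter D)
  (a b : nat -> R) (r s : R) : lim_is D a r -> lim_is D b s ->
  lim_is D (fun q => a q * b q) (r * s).
Proof.
move=> ha hb eps he.
set T := `|s| + 1; set Rr := `|r| + 1.
have hT : 0 < T by rewrite /T; have := normr_ge0 s; lra.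
have hR : 0 < Rr by rewrite /Rr; have := normr_ge0 r; lra.
have d1 : 0 < eps / (2 * T) by apply: divr_gt0 => //; lra.
have d2 : 0 < Num.min 1 (eps / (2 * Rr)).
  by rewrite lt_min ltr01 /=; apply: divr_gt0 => //; lra.
apply: aeS (aeI (ha _ d1) (hb _ d2)) => q [h1 h2].
move: h2; rewrite lt_min => /andP [h2 h3].
have e0 : a q * b q - r * s = (a q - r) * b q + r * (b q - s) by ring.
have e1 : `|b q| <= T.
  rewrite /T; have := ler_distD s (b q) 0; rewrite !subr0; lra.
have e2 : `|a q - r| * T < eps / 2.
  by move: h1; rewrite ltr_pdivlMr ?mulr_gt0 // => h; lra.
have e3 : `|b q - s| * Rr < eps / 2.
  by move: h3; rewrite ltr_pdivlMr ?mulr_gt0 // => h; lra.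
have e4 : `|a q - r| * `|b q| <= `|a q - r| * T by apply: ler_wpM2l.
have e5 : `|r| * `|b q - s| <= Rr * `|b q - s|.
  by apply: ler_wpM2r => //; rewrite /Rr; lra.
rewrite e0; apply: le_lt_trans (ler_normD _ _) _; rewrite !normrM.
lra.
Qed.

Arguments lim_uniq {R D FD a r s}. Arguments lim_ex {R D UD a B}.
Arguments lim_ae {R D FD a b r}. Arguments lim_const {R D FD}.
Arguments lim_add {R D FD a b r s}. Arguments lim_norm {R D FD a r}.
Arguments lim_mul {R D FD a b r s}.

Definition st (R : realType) (D : set_system nat) (a : nat -> R) : R :=
  xget 0 [set r | lim_is D a r].
Arguments st {R}.

Lemma st_lim (R : realType) (D : set_system nat) (a : nat -> R) (r : R) :
  lim_is D a r -> lim_is D a (st D a).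
Proof. by move=> h; apply: (@xgetPex _ 0 [set r | lim_is D a r]); exists r. Qed.
Arguments st_lim {R D a r}.

Lemma st_eq (R : realType) (D : set_system nat) (FD : ProperFilter D)
  (a : nat -> R) (r : R) : lim_is D a r -> st D a = r.
Proof. by move=> h; apply: (lim_uniq (st_lim h) h). Qed.
Arguments st_eq {R D FD a r}.

Lemma lim_opp (R : realType) (D : set_system nat) (FD : Filter D)
  (a : nat -> R) (r : R) : lim_is D a r -> lim_is D (fun q => - a q) (- r).
Proof.
move=> ha eps he; apply: aeS (ha _ he) => q h.
by rewrite -opprD normrN.
Qed.
Arguments lim_opp {R D FD a r}.

Arguments inS_rep {l m q z}. Arguments rep_add {q z1 z2 a b c d h1 h2 s}.
Arguments rep_mul {q z1 z2 a b c d h1 h2}. Arguments inS_mono {l m m' q z}.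
Arguments inS_add {l m n q z1 z2 s}. Arguments inS_mul {l m n q z1 z2}.

Definition small (l : hypint) (K q : nat) := 2 * l q ^+ K * l q ^+ K < q%:Z.

Lemma val_bound (R : realType) (l : hypint) (m q : nat) (hq : prime q) (z : 'F_q) :
  1 <= l q -> inS l m z -> small l m q -> `|val R z| <= m%:R.
Proof.
move=> hl hz hs; have [a [b [hr hab]]] := inS_rep hz.
have [-> _] := @val_small R q hq z a b _ _ hr (lexx _) hs.
have hb : b != 0 by case: hr => /int_nz.
rewrite normrM normfV ler_pdivrMr ?normr_gt0 ?intr_eq0 //.
by rewrite -!intr_norm pmulrn -intrM ler_int.
Qed.

Lemma val_addsub (R : realType) (l : hypint) (m n q : nat) (hq : prime q)
  (z1 z2 : 'F_q) (s : int) : `|s| = 1 ->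
  2 <= l q -> inS l m z1 -> inS l n z2 -> small l (m + n).+1 q ->
  val R (z1 + s%:~R * z2) = val R z1 + s%:~R * val R z2 /\
  forall k1 k2, minpair (z1 + s%:~R * z2) k1 k2 ->
    (`|k1|%:~R / `|k2|%:~R : R) = `|val R z1 + s%:~R * val R z2|.
Proof.
move=> hs hl hz1 hz2 hsm.
have [a [b [hr1 _]]] := inS_rep hz1.
have [c [d [hr2 _]]] := inS_rep hz2.
have hb : b != 0 by case: hr1 => /int_nz.
have hd : d != 0 by case: hr2 => /int_nz.
have hl1 : 1 <= l q by lia.
have em : l q ^+ m <= l q ^+ (m + n).+1 by apply: ler_weXn2l => //; lia.
have en : l q ^+ n <= l q ^+ (m + n).+1 by apply: ler_weXn2l => //; lia.
have [v1 _] := @val_small R q hq z1 a b _ _ hr1 em hsm.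
have [v2 _] := @val_small R q hq z2 c d _ _ hr2 en hsm.
have hr := rep_add hs hr1 hr2.
have eh : 2 * l q ^+ m * l q ^+ n <= l q ^+ (m + n).+1.
  rewrite exprS exprD mulrA; apply: ler_wpM2r; first by apply: exprn_ge0; lia.
  by apply: ler_wpM2r => //; apply: exprn_ge0; lia.
have [v3 v4] := @val_small R q hq _ _ _ _ _ hr eh hsm.
rewrite v1 v2 -ratio_add //; split => // k1 k2 hk; exact: v4.
Qed.

Lemma val_mul (R : realType) (l : hypint) (m n q : nat) (hq : prime q)
  (z1 z2 : 'F_q) :
  2 <= l q -> inS l m z1 -> inS l n z2 -> small l (m + n).+1 q ->
  val R (z1 * z2) = val R z1 * val R z2.
Proof.
move=> hl hz1 hz2 hsm.
have [a [b [hr1 _]]] := inS_rep hz1.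
have [c [d [hr2 _]]] := inS_rep hz2.
have hb : b != 0 by case: hr1 => /int_nz.
have hd : d != 0 by case: hr2 => /int_nz.
have hl1 : 1 <= l q by lia.
have em : l q ^+ m <= l q ^+ (m + n).+1 by apply: ler_weXn2l => //; lia.
have en : l q ^+ n <= l q ^+ (m + n).+1 by apply: ler_weXn2l => //; lia.
have [v1 _] := @val_small R q hq z1 a b _ _ hr1 em hsm.
have [v2 _] := @val_small R q hq z2 c d _ _ hr2 en hsm.
have hr := rep_mul hr1 hr2.
have eh : l q ^+ m * l q ^+ n <= l q ^+ (m + n).+1.
  by rewrite -exprD; apply: ler_weXn2l => //; lia.
have [v3 _] := @val_small R q hq _ _ _ _ _ hr eh hsm.
by rewrite v1 v2 -ratio_mul.
Qed.

Lemma surj_facts (R : realType) (r : R) (L : int) (N : nat) :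
  2 <= L -> N%:Z < L -> `|r| + 1 <= N%:R -> (2 <= N)%N ->
  [/\ `|Num.floor (r * L%:~R)| < L ^+ N, L < L ^+ N &
      `|Num.floor (r * L%:~R)| <= N%:Z * `|L|].
Proof.
move=> hL hNL hr hN.
set fl := Num.floor (r * L%:~R).
have f1 : (fl%:~R : R) <= r * L%:~R by apply: floor_le.
have f2 : r * L%:~R < (fl + 1)%:~R by apply: floorD1_gt.
rewrite intrD in f2.
have hLr : (2 : R) <= L%:~R by rewrite (_ : 2 = 2%:~R) // ler_int.
have := lexx `|r|; rewrite ler_norml => /andP [hr1 hr2].
have hNr : (N%:R : R) = (N%:Z)%:~R by [].
have g1 : r * L%:~R <= `|r| * L%:~R by apply: ler_wpM2r => //; lra.
have g2 : - `|r| * L%:~R <= r * L%:~R by apply: ler_wpM2r => //; lra.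
have g3 : (`|r| + 1) * L%:~R <= N%:R * L%:~R by apply: ler_wpM2r => //; lra.
have g4 : (`|fl|%:~R : R) <= (N%:Z * L)%:~R.
  rewrite intrM -hNr intr_norm; rewrite ler_norml; apply/andP; split; nra.
have g5 : `|fl| <= N%:Z * L by rewrite -(ler_int R).
have e2 : L ^+ 2 <= L ^+ N by apply: ler_weXn2l => //; lia.
have e3 : N%:Z * L < L * L by nia.
have e4 : L < L * L by nia.
move: e2; rewrite expr2 => e2.
split; lia.
Qed.

Lemma surj_point (R : realType) (r : R) (l : hypint) (q N : nat) (hq : prime q) :
  2 <= l q -> l q < q%:Z -> N%:Z < l q -> `|r| + 1 <= N%:R -> (2 <= N)%N ->
  small l N q ->
  inS l N ((Num.floor (r * (l q)%:~R))%:~R / (l q)%:~R : 'F_q) /\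
  `|val R ((Num.floor (r * (l q)%:~R))%:~R / (l q)%:~R : 'F_q) - r| <= (l q)%:~R^-1.
Proof.
move=> hL hLq hNL hr hN hs.
have [f1 f2 f3] := @surj_facts R r (l q) N hL hNL hr hN.
set fl := Num.floor (r * (l q)%:~R) in f1 f2 f3 *.
have hLF : ((l q)%:~R : 'F_q) != 0.
  rewrite Fq_int_eq0 //; apply/negP => hd.
  have := @dvdz_small q (l q) hd ltac:(lia); lia.
split; first by exists fl, (l q); split => //; lia.
have hrep : rep ((fl%:~R / (l q)%:~R) : 'F_q) fl (l q) (l q ^+ N) by split => //; lia.
have [-> _] := @val_small R q hq _ _ _ _ _ hrep (lexx _) hs.
have hLr : (0 : R) < (l q)%:~R by rewrite ltr0z; lia.
have -> : (fl%:~R / (l q)%:~R - r : R) = (fl%:~R - r * (l q)%:~R) / (l q)%:~R.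
  by field; rewrite gt_eqF.
rewrite normrM normfV (gtr0_norm hLr); apply: le_trans (_ : _ <= 1 * _) _; last by rewrite mul1r.
apply: ler_wpM2r; first by rewrite invr_ge0 ltW.
have g1 : (fl%:~R : R) <= r * (l q)%:~R by apply: floor_le.
have g2 : r * (l q)%:~R < (fl + 1)%:~R by apply: floorD1_gt.
rewrite intrD in g2.
rewrite ler_norml; apply/andP; split; lra.
Qed.

Theorem proposition3p4 (R : realType) (D : set_system nat) (UD : UltraFilter D)
  (hD : nonprincipal D) (hprimes : D [set q | prime q])
  (M : hypint -> Prop) (hM : elem_intermediate D M)
  (hqM : forall x : hypint, M x -> ae D (fun q => x q < q%:Z))
  (l : hypint) (hlM : M l) (hlpos : ae D (fun q => 0 < l q))
  (hlinf : forall N : nat, ae D (fun q => N%:Z < l q)) :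
  exists phi : ultraelt -> R,
    [/\ (forall x y, Fl D l x -> Fl D l y -> Fl D l (uadd x y) /\ Fl D l (umul x y)),
        (Fl D l uone /\ phi uone = 1) /\
        (forall x y, Fl D l x -> Fl D l y ->
           phi (uadd x y) = phi x + phi y /\ phi (umul x y) = phi x * phi y),
        (forall x y, Fl D l x -> Fl D l y -> (phi x = phi y <-> approx R D x y)),
        (forall r : R, exists x, Fl D l x /\ phi x = r)
      & (forall x y, Fl D l x -> Fl D l y -> dist_is D x y `|phi x - phi y|)].
Proof.
have PD : ProperFilter D := @ultra_proper _ _ UD.
have FD : Filter D := @filter_filter _ _ PD.
have hpr : ae D (fun q => prime q) := hprimes.
have hl2 : ae D (fun q => 2 <= l q) by apply: aeS (hlinf 1%N) => q; lia.
have hsm : forall K, ae D (fun q => small l K q).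
  move=> K; have h := hqM _ (@M_pow D FD M hM l (K + K).+1 hlM).
  have h3 := aeI (FD:=FD) h hl2.
  apply: aeS h3 => q [h1 h2]; rewrite /small.
  have : 2 * l q ^+ K * l q ^+ K <= l q ^+ (K + K).+1.
    rewrite exprS exprD mulrA; apply: ler_wpM2r; first by apply: exprn_ge0; lia.
    by apply: ler_wpM2r => //; apply: exprn_ge0; lia.
  lia.
pose phi (x : ultraelt) := st D (fun q => val R (x q)).
have Flim : forall x, Fl D l x -> lim_is D (fun q => val R (x q)) (phi x).
  move=> x [m hm]; have [r hr] : exists r, lim_is D (fun q => val R (x q)) r.
    apply: (@lim_ex R D UD _ m%:R).
    apply: aeS (aeI (FD:=FD) hpr (aeI (FD:=FD) hl2 (aeI (FD:=FD) hm (hsm m)))) => q [p [h2 [hi hs]]].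
    by apply: (@val_bound R l) => //; lia.
  exact: st_lim hr.
have Hsum : forall x y (s : int), `|s| = 1 -> Fl D l x -> Fl D l y ->
    Fl D l (fun q => x q + s%:~R * y q) /\
    ae D (fun q => val R (x q + s%:~R * y q) = val R (x q) + s%:~R * val R (y q)) /\
    ae D (fun q => forall k1 k2, minpair (x q + s%:~R * y q) k1 k2 ->
       (`|k1|%:~R / `|k2|%:~R : R) = `|val R (x q) + s%:~R * val R (y q)|).
  move=> x y s hs [m hm] [n hn]; split.
    exists (m + n).+1; apply: aeS (aeI (FD:=FD) hl2 (aeI (FD:=FD) hm hn)) => q [h1 [h2 h3]].
    exact: inS_add.
  have H := aeI (FD:=FD) hpr (aeI (FD:=FD) hl2 (aeI (FD:=FD) hm (aeI (FD:=FD) hn (hsm (m + n).+1)))).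
  split; apply: aeS H => q [p [h2 [h3 [h4 h5]]]];
    have [e1 e2] := @val_addsub R l m n q p _ _ s hs h2 h3 h4 h5 => //.
have Hmul : forall x y, Fl D l x -> Fl D l y ->
    Fl D l (umul x y) /\
    ae D (fun q => val R (x q * y q) = val R (x q) * val R (y q)).
  move=> x y [m hm] [n hn]; split.
    exists (m + n + m * n)%N; apply: aeS (aeI (FD:=FD) hl2 (aeI (FD:=FD) hm hn)) => q [h1 [h2 h3]].
    by apply: inS_mul => //; lia.
  have H := aeI (FD:=FD) hpr (aeI (FD:=FD) hl2 (aeI (FD:=FD) hm (aeI (FD:=FD) hn (hsm (m + n).+1)))).
  apply: aeS H => q [p [h2 [h3 [h4 h5]]]]; exact: val_mul h2 h3 h4 h5.
have eadd : forall x y, (fun q => x q + (1%:~R) * y q) = uadd x y.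
  by move=> x y; apply: functional_extensionality_dep => q; rewrite mulr1z mul1r.
have esub : forall x y : ultraelt, (fun q => x q + ((-1)%:~R) * y q) = (fun q => x q - y q).
  by move=> x y; apply: functional_extensionality_dep => q; rewrite mulrN1z mulN1r.
have hdist : forall x y, Fl D l x -> Fl D l y ->
    lim_is D (fun q => `|val R (x q) - val R (y q)|) `|phi x - phi y| /\
    ae D (fun q => forall k1 k2, minpair (x q - y q) k1 k2 ->
       (`|k1|%:~R / `|k2|%:~R : R) = `|val R (x q) - val R (y q)|).
  move=> x y hx hy; split.
    exact: (lim_norm (FD:=FD) (lim_add (FD:=FD) (Flim x hx) (lim_opp (FD:=FD) (Flim y hy)))).
  have [_ [_ hmin]] := Hsum x y (-1) (normrN1 _) hx hy.
  by apply: aeS hmin => q; rewrite !mulrN1z !mulN1r.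
have hdist2 : forall x y, Fl D l x -> Fl D l y -> dist_is D x y `|phi x - phi y|.
  move=> x y hx hy eps he; have [hl hm] := hdist x y hx hy.
  apply: aeS (aeI (FD:=FD) hm (hl eps he)) => q [h1 h2].
  have [k1 [k2 hk]] := @minpair_ex q (x q - y q).
  by exists k1, k2; split => //; rewrite (h1 k1 k2 hk).
exists phi; split.
- move=> x y hx hy; split; last by case: (Hmul x y hx hy).
  by rewrite -eadd; case: (Hsum x y 1 (normr1 _) hx hy).
- split.
    have h1 : Fl D l uone.
      exists 1%N; apply: aeS hl2 => q h; exists 1, 1; split.
      + rewrite expr1 normr1; lia.
      + rewrite expr1 normr1; lia.
      + by rewrite mulr1z oner_eq0.
      + by rewrite mulr1z divr1.
      + lia.
    split => //.
    apply: (st_eq (FD:=PD)); apply: (lim_ae (FD:=FD) _ (lim_const (FD:=FD) 1)).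
    apply: aeS (aeI (FD:=FD) hpr (aeI (FD:=FD) hl2 (hsm 1%N))) => q [p [h2 h3]].
    have hr : rep (uone q) 1 1 1 by split; rewrite ?mulr1z ?oner_eq0 ?divr1 ?normr1.
    have hL : 1 <= l q ^+ 1 by rewrite expr1; lia.
    have [-> _] := @val_small R q p _ _ _ _ _ hr hL h3.
    by rewrite mulr1z divr1.
  move=> x y hx hy; split.
    have [_ [hv _]] := Hsum x y 1 (normr1 _) hx hy.
    apply: (st_eq (FD:=PD)); apply: (lim_ae (FD:=FD) _ (lim_add (FD:=FD) (Flim x hx) (Flim y hy))).
    by apply: aeS hv => q; rewrite !mulr1z !mul1r => ->.
  have [_ hv] := Hmul x y hx hy.
  apply: (st_eq (FD:=PD)); apply: (lim_ae (FD:=FD) _ (lim_mul (FD:=FD) (Flim x hx) (Flim y hy))).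
  by apply: aeS hv => q ->.
- move=> x y hx hy.
  have [hl hm] := hdist x y hx hy.
  have huniq : forall r, dist_is D x y r -> r = `|phi x - phi y|.
    move=> r hr; have hr' : lim_is D (fun q => `|val R (x q) - val R (y q)|) r.
      move=> eps he; apply: aeS (aeI (FD:=FD) (hr eps he) hm) => q [[k1 [k2 [hk hc]]] h1].
      by rewrite -(h1 k1 k2 hk).
    exact: (lim_uniq (FD:=PD) hr' hl).
  split.
    move=> e n; exists 0; split; last by rewrite invr_ge0 ler0n.
    by have := hdist2 x y hx hy; rewrite e subrr normr0.
  move=> ha.
  have hn : forall n : nat, `|phi x - phi y| <= n.+1%:R^-1.
    by move=> n; have [r [hr hrn]] := ha n; rewrite -(huniq r hr).
  apply/eqP; rewrite -subr_eq0 -normr_eq0; apply/eqP.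
  apply/le_anti; rewrite normr_ge0 andbT.
  rewrite leNgt; apply/negP => hd.
  set d := `|phi x - phi y| in hn hd.
  have h1 := truncnS_gt (d^-1).
  have h2 := hn (Num.truncn (d^-1)).
  set T := (Num.truncn d^-1).+1%:R in h1 h2.
  have hT : 0 < T by rewrite /T ltr0n.
  have : T^-1 < d.
    by rewrite -[d]invrK ltf_pV2 // posrE ?invr_gt0.
  by move=> h3; have := lt_le_trans h3 h2; rewrite ltxx.
- move=> r.
  set t := Num.truncn `|r|; set N := t.+2.
  have hN : `|r| + 1 <= N%:R.
    have := truncnS_gt `|r|; rewrite -/t => h; rewrite /N -natr1; lra.
  have hN2 : (2 <= N)%N by [].
  pose x : ultraelt := fun q => (Num.floor (r * (l q)%:~R))%:~R / (l q)%:~R.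
  have hlq := hqM l hlM.
  have H := aeI (FD:=FD) hpr (aeI (FD:=FD) hl2 (aeI (FD:=FD) hlq (aeI (FD:=FD) (hlinf N) (hsm N)))).
  have Hx : ae D (fun q => inS l N (x q) /\ `|val R (x q) - r| <= (l q)%:~R^-1).
    by apply: aeS H => q [p [h2 [h3 [h4 h5]]]]; apply: surj_point.
  exists x; split; first by exists N; apply: aeS Hx => q [].
  apply: (st_eq (FD:=PD)) => eps he.
  set t' := Num.truncn eps^-1.
  apply: aeS (aeI (FD:=FD) Hx (hlinf t')) => q [[_ h1] h2].
  apply: le_lt_trans h1 _.
  have h3 := truncnS_gt eps^-1; rewrite -/t' in h3.
  have h4 : (t'.+1%:R : R) <= (l q)%:~R.
    by rewrite (_ : t'.+1%:R = (t'.+1%:Z)%:~R) // ler_int; lia.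
  have h5 : eps^-1 < (l q)%:~R by apply: lt_le_trans h3 h4.
  have h6 : 0 < eps^-1 by rewrite invr_gt0.
  by rewrite -[eps]invrK ltf_pV2 // posrE //; apply: lt_trans h6 h5.
- exact: hdist2.
Qed.
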